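(* Let $\mathcal{M}$ be the $2\times2$ gridding matrix with $\mathcal{M}_{1,1}=\mathrm{Av}(\pi)$, $\mathcal{M}_{2,1}=\mathrm{Dec}$, $\mathcal{M}_{1,2}=\mathrm{Dec}$, $\mathcal{M}_{2,2}=\mathrm{Inc}$ (i.e. bottom row $\mathrm{Av}(\pi),\mathrm{Dec}$ and top row $\mathrm{Dec},\mathrm{Inc}$). Then $\mathrm{Grid}(\mathcal{M})\subseteq\mathrm{Av}(\sigma)$ whenever $\pi=132$ and $\sigma=14523$, or $\pi=231$ and $\sigma=24513$, or $\pi=321$ and $\sigma\in\{32154,42513\}$.
   Context: $\mathrm{Av}(\pi)$ is the class of permutations avoiding $\pi$; $\mathrm{Inc}=\mathrm{Av}(21)$, $\mathrm{Dec}=\mathrm{Av}(12)$. For a matrix $\mathcal{M}$ of permutation classes with $k$ columns and $\ell$ rows ($\mathcal{M}_{i,j}$ in column $i$, row $j$, rows numbered bottom to top), $\mathrm{Grid}(\mathcal{M})$ is the set of permutations $\tau$ of length $n$ for which there are $1=c_1\le\dots\le c_{k+1}=n+1$, $1=r_1\le\dots\le r_{\ell+1}=n+1$ such that for each $i,j$ the points $(x,\tau_x)$ with $c_i\le x<c_{i+1}$, $r_j\le\tau_x<r_{j+1}$ form a pattern belonging to $\mathcal{M}_{i,j}$. *)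

(* Defs.v *)
From mathcomp Require Import all_boot.
Set Implicit Arguments. Unset Strict Implicit. Unset Printing Implicit Defensive.

Definition is_perm (s : seq nat) : Prop := perm_eq s (iota 1 (size s)).

Definition order_iso (a b : seq nat) : Prop :=
  size a = size b /\
  forall i j, i < size a -> j < size a ->
    (nth 0 a i < nth 0 a j) = (nth 0 b i < nth 0 b j).

Definition contains (s p : seq nat) : Prop :=
  exists m : bitseq, size m = size s /\ order_iso (mask m s) p.

Definition Av (p : seq nat) (s : seq nat) : Prop := ~ contains s p.
Definition Inc := Av [:: 2; 1].
Definition Dec := Av [:: 1; 2].

(* standardization: the permutation of 1..k order-isomorphic to s
   (for s with distinct entries) *)
Definition std (s : seq nat) : seq nat :=
  [seq (count (fun y => y < x) s).+1 | x <- s].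

(* the points (x, tau_x) with c0 <= x < c1 and r0 <= tau_x < r1, read left
   to right (positions are 1-based) *)
Definition cell (tau : seq nat) (c0 c1 r0 r1 : nat) : seq nat :=
  [seq y <- [seq nth 0 tau (x.-1) | x <- iota c0 (c1 - c0)] | r0 <= y < r1].

(* Grid(M) for a k-column, l-row matrix M (M i j : column i, row j,
   1-based, rows numbered bottom to top). *)
Definition Grid (k l : nat) (M : nat -> nat -> seq nat -> Prop)
    (tau : seq nat) : Prop :=
  is_perm tau /\
  exists c r : nat -> nat,
    [/\ c 1 = 1, c k.+1 = (size tau).+1 &
        (forall i, 1 <= i <= k -> c i <= c i.+1)] /\
    [/\ r 1 = 1, r l.+1 = (size tau).+1 &
        (forall j, 1 <= j <= l -> r j <= r j.+1)] /\
    (forall i j, 1 <= i <= k -> 1 <= j <= l ->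
       M i j (std (cell tau (c i) (c i.+1) (r j) (r j.+1)))).

Definition M13 (pi : seq nat) (i j : nat) : seq nat -> Prop :=
  match i, j with
  | 1, 1 => Av pi
  | 2, 1 => Dec
  | 1, 2 => Dec
  | 2, 2 => Inc
  | _, _ => fun _ => True
  end.

(* Main.v *)
Require Import Defs.
From mathcomp Require Import all_boot zify.

Lemma iso_sym a b : order_iso a b -> order_iso b a.
Proof. by case=> hs h; split=> // i j; rewrite -hs => hi hj; rewrite h. Qed.

Lemma iso_trans a b c : order_iso a b -> order_iso b c -> order_iso a c.
Proof.
case=> h1 h2 [h3 h4]; split; first by rewrite h1.
by move=> i j hi hj; rewrite h2 // h4 // -h1.
Qed.

Definition iso2 (a b : seq nat) :=
  size a = size b /\ {in zip a b &, forall x y, (x.1 < y.1) = (x.2 < y.2)}.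

Lemma iso_iso2 a b : order_iso a b <-> iso2 a b.
Proof.
split.
  case=> hs h; split=> // x y.
  move=> /(nthP (0,0)) [i hi <-] /(nthP (0,0)) [j hj <-].
  rewrite size_zip hs minnn in hi hj.
  by rewrite !nth_zip //= h // hs.
case=> hs h; split=> // i j hi hj.
have := h (nth (0,0) (zip a b) i) (nth (0,0) (zip a b) j).
rewrite !nth_zip //=; apply; rewrite -nth_zip //; apply: mem_nth; by rewrite size_zip -hs minnn.
Qed.

Lemma zip_mask (m : bitseq) (a b : seq nat) : size a = size b ->
  zip (mask m a) (mask m b) = mask m (zip a b).
Proof.
elim: m a b => [|x m IH] [|u a] [|v b] //= [] /IH.
by case: x => //= ->.
Qed.

Lemma iso_mask m a b : order_iso a b -> order_iso (mask m a) (mask m b).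
Proof.
move=> /iso_iso2 [hs h]; apply/iso_iso2; split.
  by elim: m a b hs {h} => [|[] m IH] [|u a] [|v b] //= [] /IH ->.
rewrite zip_mask // => x y /mem_mask hx /mem_mask hy; exact: h.
Qed.

Lemma contains_subseq s t p : subseq s t -> contains s p -> contains t p.
Proof.
move=> st [m [hm hi]].
have /subseqP [m' hm' e] : subseq (mask m s) t by apply: subseq_trans st; exact: mask_subseq.
by exists m'; rewrite -e.
Qed.

Lemma contains_iso s t p : order_iso s t -> contains s p -> contains t p.
Proof.
move=> hst [m [hm hi]]; exists m; split; first by rewrite hm; case: hst.
apply: iso_trans hi; apply: iso_sym; exact: iso_mask.
Qed.

Lemma count_lt_strict (a b : pred nat) (s : seq nat) x :
  subpred a b -> x \in s -> b x -> ~~ a x -> count a s < count b s.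
Proof.
move=> sab; elim: s => //= y s IH; rewrite inE => /orP [/eqP <- | xs] bx ax.
  by rewrite bx (negbTE ax) add0n add1n ltnS sub_count.
rewrite -addnS; apply: leq_add; last exact: IH.
by case ay: (a y) => //; rewrite (sab _ ay).
Qed.

Lemma std_iso s : order_iso s (std s).
Proof.
split; first by rewrite size_map.
move=> i j hi hj; rewrite !(nth_map 0) // ltnS.
case: (ltnP (nth 0 s i) (nth 0 s j)) => h.
  apply/esym/(@count_lt_strict (fun y => y < nth 0 s i) (fun y => y < nth 0 s j) _ (nth 0 s i)).
  - by move=> y /= /ltn_trans; apply.
  - exact: mem_nth.
  - exact: h.
  - by rewrite /= ltnn.
apply/esym/negbTE; rewrite -leqNgt; apply: sub_count => y /= hy.
exact: leq_trans hy h.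
Qed.

Lemma iso_take k a b : order_iso a b -> order_iso (take k a) (take k b).
Proof.
case=> hs h; split; first by rewrite !size_take hs.
move=> i j; rewrite size_take => hi hj.
have [ka|ka] := ltnP k (size a).
  rewrite ka in hi hj; rewrite !nth_take //; apply: h; exact: ltn_trans ka.
rewrite [k < _]ltnNge ka /= in hi hj.
rewrite !take_oversize -?hs //; exact: h.
Qed.

Lemma iso_drop k a b : order_iso a b -> order_iso (drop k a) (drop k b).
Proof.
case=> hs h; split; first by rewrite !size_drop hs.
move=> i j; rewrite size_drop => hi hj.
by rewrite !nth_drop h // -ltn_subRL.
Qed.

Fixpoint bits n : seq bitseq :=
  if n is n'.+1 then [seq b :: m | b <- [:: true; false], m <- bits n'] else [:: [::]].

Lemma bits_size n m : m \in bits n -> size m = n.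
Proof.
elim: n m => [|n IH] m; first by rewrite inE => /eqP ->.
by case/allpairsP => [[b m']] /= [_ /IH <- ->].
Qed.

Lemma size_bits n m : size m = n -> m \in bits n.
Proof.
elim: n m => [|n IH] [|b m] // [] /IH hm.
by apply/allpairsP; exists (b, m); split=> //=; case: b.
Qed.

Definition order_isob (a b : seq nat) :=
  (size a == size b) && all (fun i => all (fun j =>
     (nth 0 a i < nth 0 a j) == (nth 0 b i < nth 0 b j)) (iota 0 (size a))) (iota 0 (size a)).

Definition containsb s p := has (fun m => order_isob (mask m s) p) (bits (size s)).

Lemma containsbP s p : containsb s p -> contains s p.
Proof.
case/hasP => m /bits_size hm /andP [/eqP hs /allP h]; exists m; split=> //; split=> // i j hi hj.
have hi' : i \in iota 0 (size (mask m s)) by rewrite mem_iota.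
have := allP (h i hi') j; rewrite mem_iota /= => /(_ hj); exact: eqP.
Qed.

Lemma cell_map tau c0 c1 : 1 <= c0 -> c1 - c0 <= size tau - c0.-1 ->
  [seq nth 0 tau (x.-1) | x <- iota c0 (c1 - c0)] = take (c1 - c0) (drop c0.-1 tau).
Proof.
move=> h0 h1.
have -> : iota c0 (c1 - c0) = map (addn 1) (iota c0.-1 (c1 - c0)).
  by rewrite -iotaDl add1n prednK.
rewrite -map_comp.
rewrite (eq_map (g := nth 0 tau)); last by move=> x.
by rewrite map_nth_iota.
Qed.

Lemma transfer (P : pred nat) wA sgA X p : order_iso wA sgA -> subseq wA X ->
  containsb (mask (map P wA) sgA) p -> contains (std (filter P X)) p.
Proof.
move=> hi hs /containsbP h.
apply: contains_iso (std_iso _) _.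
apply: (@contains_subseq (filter P wA)); last first.
  rewrite filter_mask; apply: contains_iso h; apply: iso_sym; exact: iso_mask.
rewrite subseq_filter filter_all /=.
apply: subseq_trans hs; exact: filter_subseq.
Qed.

Definition downclosed (sg : seq nat) (B : bitseq) :=
  all (fun i => all (fun j =>
    ((nth 0 sg i < nth 0 sg j) && nth false B j) ==> nth false B i) (iota 0 5)) (iota 0 5).

Definition Fcheck (sg p : seq nat) :=
  all (fun k => all (fun B => downclosed sg B ==>
    [|| containsb (mask (take k B) (take k sg)) p,
        containsb (mask (map negb (take k B)) (take k sg)) [:: 1; 2],
        containsb (mask (drop k B) (drop k sg)) [:: 1; 2] |
        containsb (mask (map negb (drop k B)) (drop k sg)) [:: 2; 1]]) (bits 5))
   (iota 0 6).

Theorem proposition13 (pi sigma : seq nat) :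
  [\/ pi = [:: 1; 3; 2] /\ sigma = [:: 1; 4; 5; 2; 3],
      pi = [:: 2; 3; 1] /\ sigma = [:: 2; 4; 5; 1; 3],
      pi = [:: 3; 2; 1] /\ sigma = [:: 3; 2; 1; 5; 4] |
      pi = [:: 3; 2; 1] /\ sigma = [:: 4; 2; 5; 1; 3]] ->
  forall tau : seq nat, Grid 2 2 (M13 pi) tau -> Av sigma tau.
Proof.
move=> hcase tau [hperm [c [r [[c1 c3 cm] [[r1 r3 rm] hM]]]]] hcont.
have Fok : Fcheck sigma pi by case: hcase => [][-> ->]; vm_compute.
have hs5 : size sigma = 5 by case: hcase => [][_ ->].
set n := size tau in c3 r3.
have hval : forall y, y \in tau -> 0 < y <= n.
  by move=> y; rewrite (perm_mem hperm) mem_iota add1n ltnS.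
set C := c 2. set R := r 2.
have hC1 : 1 <= C by rewrite -c1; exact: cm.
have hC2 : C <= n.+1 by rewrite -c3; exact: cm.
have hR2 : R <= n.+1 by rewrite -r3; exact: rm.
set A := take C.-1 tau. set D := drop C.-1 tau.
have eL : forall r0 r1_, cell tau (c 1) (c 2) r0 r1_ = [seq y <- A | r0 <= y < r1_].
  move=> r0 r1_; rewrite /cell c1 -/C cell_map //= ?drop0 ?subn1 //.
  rewrite subn0 -/n; lia.
have eR : forall r0 r1_, cell tau (c 2) (c 3) r0 r1_ = [seq y <- D | r0 <= y < r1_].
  move=> r0 r1_; rewrite /cell c3 -/C cell_map // ?take_oversize //.
    rewrite size_drop -/n; lia.
  rewrite -/n; lia.
have hLB : ~ contains (std [seq y <- A | y < R]) pi.
  have := hM 1 1 isT isT; rewrite /= eL r1 -/R.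
  rewrite (eq_in_filter (a2 := fun y => y < R)) // => y /mem_take /hval /andP [-> _] //.
have hLT : ~ contains (std [seq y <- A | ~~ (y < R)]) [:: 1; 2].
  have := hM 1 2 isT isT; rewrite /= eL r3 -/R.
  rewrite (eq_in_filter (a2 := fun y => ~~ (y < R))) // => y /mem_take /hval /andP [_ h].
  by rewrite -leqNgt ltnS h andbT.
have hRB : ~ contains (std [seq y <- D | y < R]) [:: 1; 2].
  have := hM 2 1 isT isT; rewrite /= eR r1 -/R.
  rewrite (eq_in_filter (a2 := fun y => y < R)) // => y /mem_drop /hval /andP [-> _] //.
have hRT : ~ contains (std [seq y <- D | ~~ (y < R)]) [:: 2; 1].
  have := hM 2 2 isT isT; rewrite /= eR r3 -/R.
  rewrite (eq_in_filter (a2 := fun y => ~~ (y < R))) // => y /mem_drop /hval /andP [_ h].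
  by rewrite -leqNgt ltnS h andbT.
case: hcont => m [hm hiso].
have etau : tau = A ++ D by rewrite cat_take_drop.
have sA : size (take (size A) m) = size A.
  apply: size_takel; rewrite hm -/n; have := congr1 size etau; rewrite size_cat; lia.
set wA := mask (take (size A) m) A. set wD := mask (drop (size A) m) D.
have ew : mask m tau = wA ++ wD.
  by rewrite {1}etau -{1}(cat_take_drop (size A) m) mask_cat.
rewrite ew in hiso.
set k := size wA.
have hsw : size (wA ++ wD) = 5 by case: hiso => -> .
set B := map (fun y => y < R) (wA ++ wD).
have hk : k \in iota 0 6 by rewrite mem_iota; move: hsw; rewrite size_cat -/k; lia.
have hB : B \in bits 5 by apply: size_bits; rewrite size_map.
have hdc : downclosed sigma B.
  case: hiso => _ hh.
  apply/allP => i; rewrite mem_iota => /andP [_ hi]; apply/allP => j.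
  rewrite mem_iota => /andP [_ hj]; apply/implyP => /andP [hij].
  rewrite /B !(nth_map 0) ?hsw //.
  rewrite -hh ?hsw // in hij.
  exact: ltn_trans hij.
have isoA : order_iso wA (take k sigma).
  by rewrite -(take_size_cat wD (erefl k)); exact: iso_take.
have isoD : order_iso wD (drop k sigma).
  by rewrite -(drop_size_cat wD (erefl k)); exact: iso_drop.
have eB1 : take k B = map (fun y => y < R) wA by rewrite /B -map_take take_size_cat.
have eB2 : drop k B = map (fun y => y < R) wD by rewrite /B -map_drop drop_size_cat.
have := implyP (allP (allP Fok k hk) B hB) hdc.
rewrite eB1 eB2 -!map_comp.
case/or4P => h.
- apply: hLB; exact: transfer isoA (mask_subseq _ _) h.
- apply: hLT; exact: transfer isoA (mask_subseq _ _) h.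
- apply: hRB; exact: transfer isoD (mask_subseq _ _) h.
- apply: hRT; exact: transfer isoD (mask_subseq _ _) h.
Qed.
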